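(* Let $k\ge 2$, let $\lambda_1,\ldots,\lambda_k$ be nonzero integers with $\gcd(\lambda_1,\ldots,\lambda_k)=1$, $g_i=\gcd(\lambda_j:j\ne i)$, and $p=\prod_{i=1}^k g_i$. Let $A\subset\mathbb{Z}$ be finite. For each $1\le i\le k$ write $A=\bigcup_{j=1}^{m_i}A_{ij}$ (disjoint) where the $A_{ij}$ are the nonempty intersections of $A$ with residue classes mod $g_i$, $A_{ij}=a_{ij}+g_i\cdot A'_{ij}$ with $0\le a_{ij}<g_i$. Similarly write $A=\bigcup_{e=1}^m P_e$ (disjoint) where the $P_e$ are the nonempty intersections of $A$ with residue classes mod $p$, $P_e=p_e+p\cdot P'_e$ with $0\le p_e<p$. For fixed $e$ and each $i$, let $e_i\in\{1,\dots,m_i\}$ be the index with $p_e\equiv a_{ie_i}\pmod{g_i}$ (so $P_e=\bigcap_i A_{ie_i}$). Suppose that $A'_{ie_i}$ is fully distributed mod $g_i$ for every $1\le i\le k$. Then either $P'_e$ is fully distributed mod $g_i$ for every $1\le i\le k$, or $$|\lambda_1\cdot A_{1e_1}+\cdots+\lambda_k\cdot A_{ke_k}|\ \ge\ |\lambda_1\cdot P_e+\cdots+\lambda_k\cdot P_e|+|P_e|.$$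
   Context: For an integer $d$ and a finite set $A$, $d\cdot A=\{da:a\in A\}$, $x+A=\{x+a:a\in A\}$; sums of sets are Minkowski sums. A set $A\subset\mathbb{Z}$ is fully distributed (FD) mod $q$ if it intersects every residue class mod $q$. The $g_i$ are pairwise coprime. *)

(* Defs.v *)
(* integers via ssrint/intdiv; finite sets of integers as
   sequences (duplicates irrelevant; cardinality = size of undup). *)
From HB Require Import structures.
From mathcomp Require Import all_boot all_order all_algebra.
Set Implicit Arguments. Unset Strict Implicit. Unset Printing Implicit Defensive.
Import Order.TTheory GRing.Theory Num.Theory.
Local Open Scope ring_scope.

Definition cardZ (S : seq int) : nat := size (undup S).

Definition dil (d : int) (A : seq int) : seq int := [seq d * a | a <- A].

Definition sumset (A B : seq int) : seq int := [seq a + b | a <- A, b <- B].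

Definition bigsum (k : nat) (F : 'I_k -> seq int) : seq int :=
  \big[sumset/[:: 0]]_(i < k) F i.

Definition FD (q : int) (S : seq int) : Prop :=
  forall c : int, exists2 x, x \in S & (x = c %[mod q])%Z.

Definition resclass (A : seq int) (q r : int) : seq int :=
  [seq x <- A | (q %| x - r)%Z].

(* given S contained in r + q.Z, the set S' with S = r + q . S' *)
Definition shrink (S : seq int) (q r : int) : seq int :=
  [seq ((x - r) %/ q)%Z | x <- S].

Definition gexc (k : nat) (lam : 'I_k -> int) (i : 'I_k) : int :=
  \big[gcdz/0]_(j < k | j != i) lam j.

Definition pprod (k : nat) (lam : 'I_k -> int) : int :=
  \prod_(i < k) gexc lam i.

(* Main.v *)
Require Import Defs.
From HB Require Import structures.
From mathcomp Require Import all_boot all_order all_algebra.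
Import Order.TTheory GRing.Theory Num.Theory.
From Stdlib Require Import Classical.
From mathcomp Require Import ring.
Set Implicit Arguments. Unset Strict Implicit. Unset Printing Implicit Defensive.
Import Order.TTheory GRing.Theory Num.Theory.
Local Open Scope ring_scope.

Lemma coprimez_of_dvd1 m n : (gcdz m n %| 1)%Z -> coprimez m n.
Proof. by rewrite dvdz1 /coprimez /gcdz. Qed.

Lemma dvd_bigg (k : nat) (P : pred 'I_k) (F : 'I_k -> int) d :
  (forall j, P j -> (d %| F j)%Z) -> (d %| \big[gcdz/0]_(j < k | P j) F j)%Z.
Proof.
move=> h; apply: (big_ind (fun x => (d %| x)%Z)) => //.
by move=> x y hx hy; rewrite dvdz_gcd hx hy.
Qed.

Lemma bigg_dvd (k : nat) (P : pred 'I_k) (F : 'I_k -> int) j0 :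
  P j0 -> (\big[gcdz/0]_(j < k | P j) F j %| F j0)%Z.
Proof.
move=> hP; rewrite /index_enum; have : j0 \in index_enum 'I_k by rewrite mem_index_enum.
rewrite /index_enum; elim: (Finite.enum _) => // x s IH.
rewrite inE big_cons; case/orP=> [/eqP<-|hs].
  by rewrite hP dvdz_gcdl.
case: (P x); last exact: IH.
exact: dvdz_trans (dvdz_gcdr _ _) (IH hs).
Qed.

Lemma mem_sumset (B C : seq int) x :
  x \in sumset B C <-> exists a b, [/\ a \in B, b \in C & x = a + b].
Proof.
split.
  by case/allpairsP=> [[a b] [/= ha hb ->]]; exists a, b.
by case=> a [b [ha hb ->]]; apply/allpairsP; exists (a, b).
Qed.

Lemma mem_bigsum (k : nat) (F : 'I_k -> seq int) x :
  x \in bigsum F <-> exists f : 'I_k -> int,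
    (forall i, f i \in F i) /\ x = \sum_(i < k) f i.
Proof.
elim: k F x => [|k IH] F x.
  rewrite /bigsum big_ord0 inE; split.
    by move/eqP->; exists (fun _ => 0); split; [case|rewrite big_ord0].
  by case=> f [_ ->]; rewrite big_ord0.
rewrite /bigsum big_ord_recl /=; split.
  case/mem_sumset=> a [b [ha hb ->]].
  have := (IH (fun i => F (lift ord0 i)) b).1 hb.
  case=> f' [hf' ->].
  exists (fun i : 'I_k.+1 => if unlift ord0 i is Some j then f' j else a).
  split.
    move=> i; case: unliftP => [j ->|->] //.
  rewrite big_ord_recl /= unlift_none; congr (_ + _).
  by apply: eq_bigr => i _ /=; rewrite liftK.
case=> f [hf ->]; rewrite big_ord_recl /=; apply/mem_sumset.
exists (f ord0), (\sum_(i < k) f (lift ord0 i)); split => //.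
by apply/(IH (fun i => F (lift ord0 i))); exists (fun i => f (lift ord0 i)).
Qed.

Lemma card_ge (X B C : seq int) :
  {subset B <= X} -> {subset C <= X} -> (forall x, x \in B -> x \notin C) ->
  (cardZ B + cardZ C <= cardZ X)%N.
Proof.
move=> hB hC hBC; rewrite /cardZ -size_cat; apply: uniq_leq_size.
  rewrite cat_uniq !undup_uniq andbT /=; apply/hasPn => x; rewrite !mem_undup.
  by move=> hx; apply/negP => /hBC; rewrite hx.
by move=> x; rewrite mem_cat !mem_undup => /orP[/hB|/hC].
Qed.

Lemma cardZ_map_inj (h : int -> int) s : injective h -> cardZ (map h s) = cardZ s.
Proof. by move=> hi; rewrite /cardZ undup_map_inj // size_map. Qed.

Lemma dvd_prod (k : nat) (F : 'I_k -> int) i : (F i %| \prod_(j < k) F j)%Z.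
Proof. by rewrite (bigD1 i) //= dvdz_mulr. Qed.
Unset Implicit Arguments.
Theorem mainTheorem4 (k : nat) (lam : 'I_k -> int) (A : seq int) (r : int)
  (hk : (2 <= k)%N)
  (hnz : forall i, lam i != 0)
  (hgcd : \big[gcdz/0]_(i < k) lam i = 1)
  (hr : 0 <= r < pprod lam)
  (hP : resclass A (pprod lam) r != [::])
  (hFD : forall i : 'I_k,
     FD (gexc lam i)
        (shrink (resclass A (gexc lam i) (r %% gexc lam i)%Z)
                (gexc lam i) (r %% gexc lam i)%Z)) :
  (forall i : 'I_k,
     FD (gexc lam i) (shrink (resclass A (pprod lam) r) (pprod lam) r))
  \/
  (cardZ (bigsum (fun i => dil (lam i)
           (resclass A (gexc lam i) (r %% gexc lam i)%Z)))
   >= cardZ (bigsum (fun i => dil (lam i) (resclass A (pprod lam) r)))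
      + cardZ (resclass A (pprod lam) r))%N.
Proof.
case: (classic (forall i : 'I_k,
     FD (gexc lam i) (shrink (resclass A (pprod lam) r) (pprod lam) r))) => H;
  [by left | right].
have [i0 Hi0] := not_all_ex_not _ _ H.
set p := pprod lam in hr hP Hi0 *.
set P := resclass A p r in hP Hi0 *.
set g := gexc lam i0 in Hi0.
have [c Hc] : exists c, forall q, q \in shrink P p r -> ~~ (g %| q - c)%Z.
  apply: NNPP => hn; apply: Hi0 => c; apply: NNPP => hc; apply: hn.
  exists c => q hq; apply/negP => hd; apply: hc; exists q => //.
  by apply/eqP; rewrite eqz_mod_dvd.
have hgj : forall j, j != i0 -> (g %| lam j)%Z.
  move=> j hj; rewrite /g /gexc; exact: (@bigg_dvd k (fun l => l != i0) lam j hj).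
have [j1 hj1] : exists j1 : 'I_k, j1 != i0.
  case: (boolP (val i0 == 0%N)) => h0.
    exists (Ordinal (hk : (1 < k)%N)); apply/eqP => /(congr1 val) /=.
    by rewrite (eqP h0).
  exists (Ordinal (leq_trans (isT : (0 < 2)%N) hk)); apply/eqP => /(congr1 val) /= h.
  by move: h0; change (val i0) with (nat_of_ord i0); rewrite -h.
have hg0 : g != 0.
  apply/eqP => hg; have := hgj _ hj1; rewrite hg dvd0z; apply/negP; exact: hnz.
pose p1 := \prod_(j < k | j != i0) gexc lam j.
have hpg : p = g * p1 by rewrite /p /pprod (bigD1 i0).
have hcopl : coprimez g (lam i0).
  apply: coprimez_of_dvd1.
  suff: (gcdz g (lam i0) %| \big[gcdz/0]_(i < k) lam i)%Z by rewrite hgcd.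
  apply: (@dvd_bigg k (fun _ => true) lam) => j _.
  case: (eqVneq j i0) => [->|hj]; first exact: dvdz_gcdr.
  exact: dvdz_trans (dvdz_gcdl _ _) (hgj _ hj).
have hcopp : coprimez g p1.
  apply: (big_ind (coprimez g)).
  - by rewrite /coprimez /gcdz /= gcdn1.
  - by move=> a b ha hb; rewrite coprimezMr ha hb.
  move=> j hj; apply: coprimez_of_dvd1.
  suff: (gcdz g (gexc lam j) %| \big[gcdz/0]_(i < k) lam i)%Z by rewrite hgcd.
  apply: (@dvd_bigg k (fun _ => true) lam) => l _.
  case: (eqVneq l j) => [->|hl].
    exact: dvdz_trans (dvdz_gcdl _ _) (hgj _ hj).
  apply: dvdz_trans (dvdz_gcdr _ _) _; rewrite /gexc; exact: (@bigg_dvd k (fun l => l != j) lam l hl).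
have hPA : forall i x, x \in P -> x \in resclass A (gexc lam i) (r %% gexc lam i)%Z.
  move=> i x; rewrite !mem_filter => /andP[hd ->]; rewrite andbT.
  have -> : x - (r %% gexc lam i)%Z = (x - r) + (r %/ gexc lam i)%Z * gexc lam i.
    by rewrite {2}(divz_eq r (gexc lam i)); ring.
  apply: rpredD; last exact: dvdz_mull.
  exact: (dvdz_trans (dvd_prod (gexc lam) i) hd).
have hPr : forall x, x \in P -> (p %| x - r)%Z.
  by move=> x; rewrite mem_filter => /andP[].
have [y0 hy0] : exists y0, y0 \in P.
  by move: hP; case: (P) => // y s _; exists y; rewrite mem_head.
pose c' := (r %/ g)%Z + p1 * c.
have [t ht htc] := hFD i0 c'.
case/mapP: ht => x0 hx0 ht.
have hx0g : x0 - (r %% g)%Z = t * g.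
  by rewrite ht divzK //; move: hx0; rewrite mem_filter => /andP[].
have htc' : (g %| t - c')%Z by rewrite -eqz_mod_dvd; apply/eqP.
pose f' (y : int) (i : 'I_k) := if i == i0 then x0 else if i == j1 then y else y0.
pose h y := \sum_(i < k) lam i * f' y i.
have hinj : injective h.
  move=> y1 y2; rewrite /h (bigD1 j1) //= [in RHS](bigD1 j1) //=.
  rewrite (eq_bigr (fun i => lam i * f' y2 i)); last first.
    by move=> i hi; rewrite /f' (negbTE hi).
  move/addIr; rewrite /f' (negbTE hj1) eqxx; apply: mulfI; exact: hnz.
have hf'A : forall y i, y \in P ->
    f' y i \in resclass A (gexc lam i) (r %% gexc lam i)%Z.
  move=> y i hy; rewrite /f'; case: (eqVneq i i0) => [->|_]; first exact: hx0.
  by case: (i == j1); apply: hPA.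
rewrite -(cardZ_map_inj P hinj) addnC; apply: card_ge.
- move=> x /mapP[y hy ->]; apply/mem_bigsum.
  exists (fun i => lam i * f' y i); split => // i; exact/map_f/hf'A.
- move=> x /mem_bigsum[f [hf ->]]; apply/mem_bigsum; exists f; split => // i.
  by case/mapP: (hf i) => a ha ->; apply/map_f/hPA.
move=> x /mapP[y hy ->]; apply/negP => /mem_bigsum[f [hf hfe]].
have hf0 := hf i0; case/mapP: hf0 => a ha hfa.
pose q := ((a - r) %/ p)%Z.
have hq : q \in shrink P p r by apply: map_f.
have haq : a - r = q * p by rewrite divzK // hPr.
have hD : (g * g %| (\sum_(i < k) f i - h y)
             - lam i0 * g * (q * p1 + (r %/ g)%Z - t))%Z.
  rewrite /h -sumrB (bigD1 i0) //= hfa /f' eqxx.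
  have -> : lam i0 * a - lam i0 * x0 = lam i0 * g * (q * p1 + (r %/ g)%Z - t).
    have -> : a = q * p + r by rewrite -haq; ring.
    have -> : x0 = t * g + (r %% g)%Z by rewrite -hx0g; ring.
    rewrite hpg {1}(divz_eq r g); ring.
  rewrite addrC addrK; apply: rpred_sum => i hi.
  case/mapP: (hf i) => b hb ->; rewrite -mulrBr.
  have hb' : (p %| b - f' y i)%Z.
    have -> : b - f' y i = (b - r) - (f' y i - r) by ring.
    apply: rpredB; first exact: hPr.
    rewrite /f' (negbTE hi); by case: (i == j1); apply: hPr.
  apply: dvdz_trans (dvdz_mul (hgj _ hi) hb').
  by rewrite hpg mulrA dvdz_mulr.
move: hD; rewrite -hfe subrr sub0r rpredN => hD.
have : (g * g %| g * (lam i0 * (q * p1 + (r %/ g)%Z - t)))%Z.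
  by rewrite mulrA (mulrC g).
rewrite dvdz_mul2l // Gauss_dvdzr // => hX.
have : (g %| p1 * (q - c))%Z.
  have -> : p1 * (q - c) = (q * p1 + (r %/ g)%Z - t) + (t - c') by rewrite /c'; ring.
  by rewrite rpredD.
by rewrite Gauss_dvdzr // (negbTE (Hc _ hq)).
Qed.
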